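(* Let $A\subseteq\Omega$ be arbitrary. Then $\mu^*(A)=0$ if and only if there exists a $\mathcal{P}$-e-process $(E_t)_{t\in\mathbb{N}_0}$ such that $\lim_{t\to\infty}E_t=\infty$ at every point of $A$.
   Context: Standing setup: $(\Omega, (\mathcal{F}_t)_{t\in\mathbb{N}_0}, \mathcal{F})$ is a filtered measurable space with $\mathcal{F} = \sigma\big(\bigcup_{t} \mathcal{F}_t\big)$. A stopping time is a map $\tau:\Omega\to\mathbb{N}_0\cup\{\infty\}$ with $\{\tau \le t\}\in\mathcal{F}_t$ for all $t$; $\mathcal{T}$ denotes the set of all stopping times. $\mathcal{P}$ is an arbitrary family of probability measures on $\mathcal{F}$. The inverse-capital measure is defined for every $A\subseteq\Omega$ by $\mu^*(A) = \inf_{\tau\in\mathcal{T}:\, A\subseteq\{\tau<\infty\}} \sup_{\mathbb{P}\in\mathcal{P}} \mathbb{P}(\tau<\infty)$. A $\mathcal{P}$-e-process is a nonnegative (possibly $[0,\infty]$-valued) process $(E_t)_{t\in\mathbb{N}_0}$ adapted to $(\mathcal{F}_t)$ such that $\mathbb{E}_{\mathbb{P}}[E_\tau]\le 1$ for every $\mathbb{P}\in\mathcal{P}$ and every $\tau\in\mathcal{T}$, with the convention $E_\infty=\limsup_{t\to\infty}E_t$. *)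

(* Defs.v *)
From HB Require Import structures.
From mathcomp Require Import all_boot all_order all_algebra.
From mathcomp Require Import all_classical all_reals all_analysis measurable_realfun lebesgue_integral.
Set Implicit Arguments. Unset Strict Implicit. Unset Printing Implicit Defensive.
Import Order.TTheory GRing.Theory Num.Theory.
Local Open Scope classical_set_scope.
Local Open Scope ring_scope.

Section Defs.
Context {R : realType} {d : measure_display} {T : measurableType d}.

Definition filtration (F : nat -> set (set T)) : Prop :=
  (forall t, sigma_algebra setT (F t)) /\
  (forall s t, (s <= t)%N -> F s `<=` F t).

(* Stopping times with values in N_0 \cup {oo}; [None] encodes oo. *)
Definition stopping_time (F : nat -> set (set T)) (tau : T -> option nat) : Prop :=
  forall t : nat, F t [set w | exists2 n, tau w = Some n & (n <= t)%N].

Definition finite_at (tau : T -> option nat) : set T :=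
  [set w | tau w <> None].

(* sup_{P in Ps} P(tau < oo), as a supremum inside [0, 1]
   (so the supremum over an empty family is 0). *)
Definition sup_prob (Ps : set (probability T R)) (tau : T -> option nat) : \bar R :=
  ereal_sup ([set 0%E] `|` [set (P : probability T R) (finite_at tau) | P in Ps]).

Definition mu_star (Ps : set (probability T R)) (F : nat -> set (set T))
    (A : set T) : \bar R :=
  ereal_inf [set sup_prob Ps tau |
             tau in [set tau | stopping_time F tau /\ A `<=` finite_at tau]].

Definition adapted (F : nat -> set (set T)) (E : nat -> T -> \bar R) : Prop :=
  forall (t : nat) (B : set (\bar R)), measurable B -> F t (E t @^-1` B).

Definition stopped (E : nat -> T -> \bar R) (tau : T -> option nat) (w : T) : \bar R :=
  match tau w with
  | Some n => E n w
  | None => limn_esup (fun t => E t w)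
  end.

Definition e_process (Ps : set (probability T R)) (F : nat -> set (set T))
    (E : nat -> T -> \bar R) : Prop :=
  [/\ (forall t w, (0 <= E t w)%E),
      adapted F E &
      forall P : probability T R, Ps P ->
      forall tau, stopping_time F tau ->
        (\int[P]_w stopped E tau w <= 1)%E].

End Defs.

(* Main.v *)
Require Import Defs.
From HB Require Import structures.
From mathcomp Require Import all_boot all_order all_algebra.
From mathcomp Require Import all_classical all_reals all_analysis measurable_realfun lebesgue_integral.
Import Order.TTheory GRing.Theory Num.Theory.
Local Open Scope classical_set_scope.
Local Open Scope ring_scope.

Section Helpers.
Local Open Scope ereal_scope.

Lemma nn_le_integral (R : realType) (d : measure_display) (T : measurableType d)
  (mu : {measure set T -> \bar R}) (f g : T -> \bar R) :
  (forall x, 0 <= f x) -> (forall x, 0 <= g x) -> (forall x, f x <= g x) ->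
  \int[mu]_x f x <= \int[mu]_x g x.
Proof.
move=> f0 g0 fg; rewrite !ge0_integralTE//.
apply: ereal_sup_le => _ [h hf <-]; exists h => //= x.
exact: le_trans (hf x) (fg x).
Qed.

Lemma Fsub (d : measure_display) (T : measurableType d)
    (F : nat -> set (set T)) :
  (@measurable d T) = <<s \bigcup_t F t >> -> forall t, F t `<=` measurable.
Proof. by move=> mE t X FX; rewrite mE; apply: sub_sigma_algebra; exists t. Qed.

Lemma finite_meas (R : realType) (d : measure_display) (T : measurableType d)
    (F : nat -> set (set T)) tau :
  (@measurable d T) = <<s \bigcup_t F t >> -> stopping_time F tau ->
  measurable (finite_at tau).
Proof.
move=> mE st.
have -> : finite_at tau = \bigcup_t [set w | exists2 n, tau w = Some n & (n <= t)%N].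
  apply/seteqP; split => w; rewrite /finite_at /=.
    by case E: (tau w) => [n|//] _; exists n => //; exists n.
  by move=> [t _ [n -> _]].
apply: bigcupT_measurable => t; exact: (@Fsub _ _ F mE t _ (st t)).
Qed.

Lemma esup_le (R : realType) (u : (\bar R)^nat) (G : \bar R) :
  (forall n, u n <= G) -> limn_esup u <= G.
Proof.
move=> uG; rewrite limn_esup_lim; apply: lime_le; first exact: is_cvg_esups.
apply: nearW => n; apply/ereal_supP => _ [m _ <-]; exact: uG.
Qed.

Lemma esup_ge0 (R : realType) (u : (\bar R)^nat) :
  (forall n, 0 <= u n) -> 0 <= limn_esup u.
Proof.
move=> u0; rewrite limn_esup_lim; apply: lime_ge; first exact: is_cvg_esups.
apply: nearW => n; apply: le_trans (u0 n) _; apply: ereal_sup_ubound.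
by exists n => /=.
Qed.

End Helpers.

Section Backward.
Local Open Scope ereal_scope.

Lemma hitting (R : realType) (d : measure_display) (T : measurableType d)
    (F : nat -> set (set T)) (Ps : set (probability T R)) (A : set T)
    (E : nat -> T -> \bar R) (c : R) :
  filtration F -> (@measurable d T) = <<s \bigcup_t F t >> ->
  e_process Ps F E -> (forall w, A w -> (fun t => E t w) @ \oo --> +oo%E) ->
  (0 < c)%R ->
  exists tau, (stopping_time F tau /\ A `<=` finite_at tau) /\
    forall P : probability T R, Ps P -> c%:E * P (finite_at tau) <= 1.
Proof.
move=> [salg Fmono] mE [E0 adE intE] EA c0.
pose tau w := match pselect (exists t, c%:E <= E t w) with
  | left h => Some (@ex_minn (fun t => c%:E <= E t w) h) | right _ => None end.
have tauS w n : tau w = Some n -> c%:E <= E n w /\ forall m, c%:E <= E m w -> (n <= m)%N.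
  rewrite /tau; case: pselect => [h|//].
  by case: ex_minnP => m Pm minm [<-]; split => // k /minm.
have tauN w : tau w = None -> forall m, ~ (c%:E <= E m w).
  by rewrite /tau; case: pselect => [h|nh] // _ m cm; apply: nh; exists m.
have st : stopping_time F tau.
  move=> t.
  have -> : [set w | exists2 n, tau w = Some n & (n <= t)%N] =
    \bigcup_n (if (n <= t)%N then E n @^-1` `[c%:E, +oo[ else set0).
    apply/seteqP; split => w /=.
      move=> [n /tauS [cn _] nt]; exists n => //=; rewrite nt /= in_itv /= andbT; exact: cn.
    move=> [n _]; case: ifP => nt //=; rewrite in_itv /= andbT => cn.
    case Et: (tau w) => [m|]; last by have := tauN w Et n.
    exists m => //; have [_ /(_ _ cn)] := tauS w m Et; move=> mn; exact: leq_trans mn nt.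
  have [S0 _ SU] := salg t; apply: SU => n; case: ifP => nt //.
  apply: (Fmono n t nt); apply: adE; exact: emeasurable_itv.
exists tau; split.
  split => // w Aw; rewrite /finite_at /= => Et.
  have /cvgeyPge/(_ c) := EA w Aw; case=> N _ /(_ N (leqnn N)) /= cN.
  exact: tauN w Et N cN.
move=> P PP.
have mB := @finite_meas R _ _ F tau mE st.
have -> : P (finite_at tau) = P (finite_at tau `&` setT) by rewrite setIT.
rewrite -integral_indic// -integralZl_indic//; last first.
  by move=> /(lt_trans c0); rewrite ltxx.
apply: le_trans (intE P PP tau st).
apply: nn_le_integral.
- by move=> w; rewrite lee_fin mulr_ge0 ?(ltW c0).
- move=> w; rewrite /stopped; case: (tau w) => [n|]; first exact: E0.
  by apply: esup_ge0 => n; exact: E0.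
move=> w; rewrite indicE; case: (boolP (w \in finite_at tau)) => [|_]; last first.
  rewrite mulr0; rewrite /stopped; case: (tau w) => [n|]; first exact: E0.
  by apply: esup_ge0 => n; exact: E0.
rewrite inE /finite_at /stopped /=; case Et: (tau w) => [n|//] _.
by rewrite mulr1; have [] := tauS w n Et.
Qed.

End Backward.

Section Forward.
Local Open Scope ereal_scope.

Lemma forward (R : realType) (d : measure_display) (T : measurableType d)
    (F : nat -> set (set T)) (Ps : set (probability T R)) (A : set T) :
  filtration F -> (@measurable d T) = <<s \bigcup_t F t >> ->
  mu_star Ps F A = 0%E ->
  exists E : nat -> T -> \bar R,
     e_process Ps F E /\
     forall w, A w -> (fun t => E t w) @ \oo --> +oo%E.
Proof.
move=> [salg Fmono] mE h0.
have ex k : exists tau, (stopping_time F tau /\ A `<=` finite_at tau) /\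
    sup_prob Ps tau < (1 / (2 ^ (k + 1))%:R)%:E.
  have : mu_star Ps F A < (1 / (2 ^ (k + 1))%:R)%:E.
    by rewrite h0 lte_fin divr_gt0 // ltr0n expn_gt0.
  by move=> /ereal_inf_lt [_ [tau Ht <-] lt]; exists tau.
have [tau Htau] := choice ex.
pose C t k := [set w | exists2 n, tau k w = Some n & (n <= t)%N].
pose E (t : nat) (w : T) : \bar R := \sum_(k <oo) ((\1_(C t k) w : R)%:E).
have E0 t w : 0 <= E t w by apply: nneseries_ge0 => k _ _; rewrite lee_fin.
exists E; split; [split|].
- exact: E0.
- move=> t B mB.
  pose U := g_sigma_algebraType (F t).
  have mC k : (@measurable _ U) (C t k).
    by apply: sub_sigma_algebra; exact: ((Htau k).1.1 t).
  have mf : measurable_fun (setT : set U) (E t : U -> \bar R).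
    apply: (@ge0_emeasurable_sum _ U R setT (fun k w => (\1_(C t k) w)%:E) predT).
      by move=> k x _ _; rewrite lee_fin.
    move=> k _; apply/measurable_EFinP; exact: measurable_indic.
  have := mf measurableT B mB; rewrite setTI.
  by move=> h; rewrite -(sigma_algebra_id (salg t)); exact: h.
- move=> P PP sig stsig.
  pose G w : \bar R := \sum_(k <oo) ((\1_(finite_at (tau k)) w : R)%:E).
  have mB k : measurable (finite_at (tau k)).
    exact: (@finite_meas R _ _ F (tau k) mE (Htau k).1.1).
  have G0 w : 0 <= G w by apply: nneseries_ge0 => k _ _; rewrite lee_fin.
  have EG t w : E t w <= G w.
    apply: lee_nneseries => [k _ _|k _]; first by rewrite lee_fin.
    rewrite lee_fin !indicE; case: (boolP (w \in C t k)) => //.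
    by rewrite inE => -[n Hn _]; rewrite mem_set // /finite_at /= Hn.
  apply: le_trans (@nn_le_integral R _ _ P (stopped E sig) G _ G0 _) _.
  + move=> w; rewrite /stopped; case: (sig w) => [n|] //.
    by apply: esup_ge0 => n.
  + move=> w; rewrite /stopped; case: (sig w) => [n|] //.
    by apply: esup_le => n.
  rewrite integral_nneseries //; last first.
    by move=> k; apply/measurable_EFinP; exact: measurable_indic.
  apply: le_trans (lee_nneseries (v := fun k => (1 / (2 ^ (k + 1))%:R)%:E) _ _) _.
  + by move=> k _ _; apply: integral_ge0 => w _; rewrite lee_fin.
  + move=> k _; rewrite integral_indic // setIT.
    apply: le_trans (ltW (Htau k).2); apply: ereal_sup_ubound; right; by exists P.
  have -> : \sum_(k <oo) ((1 / (2 ^ (k + 1))%:R)%:E : \bar R) = 1.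
    apply/cvg_lim => //; have := @cvg_geometric_eseries_half R 1 0.
    by rewrite expr0 divr1.
  by [].
- move=> w Aw; apply/cvgeyPge => M.
  have key m : exists N, forall t, (N <= t)%N ->
      (m%:R)%:E <= \sum_(0 <= k < m) ((\1_(C t k) w : R)%:E).
    elim: m => [|m [N HN]]; first by exists 0%N => t _; rewrite big_geq.
    have := (Htau m).1.2 w Aw; rewrite /finite_at /=; case Hm: (tau m w) => [n|//] _.
    exists (maxn N n) => t Nt.
    rewrite big_nat_recr //= -natr1 EFinD; apply: leeD.
      apply: HN; exact: leq_trans (leq_maxl N n) Nt.
    rewrite indicE mem_set //; exists n => //; exact: leq_trans (leq_maxr N n) Nt.
  have [N HN] := key (Num.Def.trunc M).+1.
  exists N => // t /= Nt.
  apply: (@le_trans _ _ (((Num.Def.trunc M).+1)%:R)%:E).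
    by rewrite lee_fin ltW // truncnS_gt.
  apply: le_trans (HN t Nt) _.
  by apply: nneseries_lim_ge => k _ _; rewrite lee_fin.
Qed.

End Forward.

Theorem mainTheorem3 (R : realType) (d : measure_display) (T : measurableType d)
    (F : nat -> set (set T)) (Ps : set (probability T R)) (A : set T) :
  filtration F ->
  (@measurable d T) = <<s \bigcup_t F t >> ->
  (mu_star Ps F A = 0%E <->
   exists E : nat -> T -> \bar R,
     e_process Ps F E /\
     forall w, A w -> (fun t => E t w) @ \oo --> +oo%E).
Proof.
move=> fF mE; split; first exact: forward.
move=> [E [eE EA]].
have sp0 tau : (0 <= sup_prob Ps tau)%E by apply: ereal_sup_ubound; left.
apply/eqP; rewrite eq_le; apply/andP; split; last first.
  by apply: le_ereal_inf_tmp => _ [tau _ <-].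
apply/lee_addgt0Pr => e e0; rewrite add0e.
have [tau [[st Atau] Hb]] := @hitting R _ _ F Ps A E e^-1 fF mE eE EA (ltac:(by rewrite invr_gt0)).
apply: ge_ereal_inf; exists (sup_prob Ps tau); first by exists tau.
apply/ereal_supP => _ [->|[P PP <-]]; first by rewrite lee_fin ltW.
have := Hb P PP.
have -> : (1 = e^-1%:E * e%:E)%E by rewrite -EFinM mulVf // gt_eqF.
by rewrite lee_pmul2l // lte_fin invr_gt0.
Qed.
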